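(* Let $G$ be a countable group with a right-invariant metric $d$ whose integer balls $B_k=\{g:d(g,e)\le k\}$ are finite, having the Besicovitch covering property with constant $C$, and such that $(B_k)$ has the multiplicative doubling property with constant $D$. Let $G$ act non-singularly on a probability space $(X,\mu)$. Then for every $f\in L^1(\mu)$ and $\epsilon>0$, $$\mu\Big(\sup_{k\ge1}\Big|\frac{\sum_{g\in B_k}\hat gf}{\sum_{g\in B_k}\hat g1}\Big|>\epsilon\Big)\le\frac{CD}{\epsilon}\|f\|_1.$$
   Context: $\omega_g=\frac{d(\mu\circ g)}{d\mu}$, $\hat gf(x)=f(gx)\omega_g(x)$. Besicovitch covering property with constant $C$: for every finite $E$ and collection $\mathcal{U}=\{B_{r(x)}(x):x\in E\}$ of closed balls centred in $E$ there is $\mathcal{V}\subseteq\mathcal{U}$ with $\mathbf{1}_E\le\sum_{U\in\mathcal{V}}\mathbf{1}_U\le C$. Multiplicative doubling with constant $D$: there is $K$ with $|B_kB_k|\le D|B_k|$ for all $k\ge K$. *)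

(* Defs.v *)
From HB Require Import structures.
From mathcomp Require Import all_boot all_order all_algebra.
From mathcomp Require Import all_classical all_reals all_analysis.
From mathcomp Require Import finmap.

Set Implicit Arguments.
Unset Strict Implicit.
Unset Printing Implicit Defensive.

Import Order.TTheory GRing.Theory Num.Theory.
Local Open Scope classical_set_scope.
Local Open Scope ring_scope.

Section Defs.
Variables (R : realType) (G : groupType).

Definition is_metric (d : G -> G -> R) : Prop :=
  [/\ forall x y, d x y = 0 <-> x = y,
      forall x y, d x y = d y x &
      forall x y z, d x z <= d x y + d y z].

Definition right_invariant (d : G -> G -> R) : Prop :=
  forall x y g, d (monoid.mul x g) (monoid.mul y g) = d x y.

Definition cball (d : G -> G -> R) (x : G) (r : R) : set G :=
  [set y | d y x <= r].

Definition Bk (d : G -> G -> R) (k : nat) : set G := cball d monoid.one k%:R.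

Definition besicovitch (d : G -> G -> R) (C : R) : Prop :=
  forall (E : set G) (r : G -> R), finite_set E ->
    (forall x, E x -> 0 <= r x) ->
    exists F : set G, F `<=` E /\
      forall y : G,
        (E y -> exists2 x, F x & cball d x (r x) y) /\
        (\sum_(x \in F) (\1_(cball d x (r x)) y : R) <= C).

Definition setMul (A B : set G) : set G :=
  [set z | exists2 a, A a & exists2 b, B b & z = monoid.mul a b].

Definition mult_doubling (d : G -> G -> R) (D : R) : Prop :=
  exists K : nat, forall k : nat, (K <= k)%N ->
    (#|` fset_set (setMul (Bk d k) (Bk d k)) |%:R : R)
      <= D * (#|` fset_set (Bk d k) |%:R).

End Defs.

Section Action.
Variables (R : realType) (G : groupType) (dX : measure_display)
  (X : measurableType dX).

Definition measurable_action (act : G -> X -> X) : Prop :=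
  [/\ forall x, act monoid.one x = x,
      forall g h x, act (monoid.mul g h) x = act g (act h x) &
      forall g, measurable_fun [set: X] (act g)].

Definition nonsingular (mu : set X -> \bar R) (act : G -> X -> X) : Prop :=
  forall g A, measurable A -> (mu (act g @^-1` A) = 0%E <-> mu A = 0%E).

(* omega g is (a real-valued version of) the Radon-Nikodym derivative
   d(mu o g)/d mu, where (mu o g)(A) = mu (g A) *)
Definition is_RN_cocycle (mu : set X -> \bar R) (act : G -> X -> X)
    (omega : G -> X -> R) : Prop :=
  forall g, [/\ measurable_fun [set: X] (omega g),
    forall x, 0 <= omega g x &
    forall A, measurable A ->
      mu (act g @` A) = (\int[mu]_(x in A) (omega g x)%:E)%E].

Definition hat (act : G -> X -> X) (omega : G -> X -> R) (g : G)
    (f : X -> R) : X -> R :=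
  fun x => f (act g x) * omega g x.

Definition hatsum (d : G -> G -> R) (act : G -> X -> X) (omega : G -> X -> R)
    (k : nat) (f : X -> R) : X -> R :=
  fun x => \sum_(g \in Bk d k) hat act omega g f x.

End Action.

(* Main.v *)
Require Import Defs.
From HB Require Import structures.
From mathcomp Require Import all_boot all_order all_algebra finmap.
From mathcomp Require Import all_classical all_reals all_analysis.
From mathcomp Require Import measurable_realfun.
From mathcomp Require Import ring lra.
Import Order.TTheory GRing.Theory Num.Theory.
Local Open Scope classical_set_scope.
Local Open Scope ring_scope.

Section density.
Local Open Scope ereal_scope.
Context d (T : measurableType d) (R : realType).
Variables (nu mu : measure T R) (g : T -> R).
Hypotheses (mg : measurable_fun setT g) (g0 : forall x, (0 <= g x)%R)
  (nug : forall A, measurable A -> nu A = \int[mu]_(x in A) (g x)%:E).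

Import HBNNSimple.

Lemma density_cov (f : T -> \bar R) (E : set T) : (forall x, 0 <= f x) ->
    measurable E -> measurable_fun E f ->
  \int[mu]_(x in E) (f x * (g x)%:E) = \int[nu]_(x in E) f x.
Proof.
move=> f0 mE mf; set G := fun x => (g x)%:E.
have mG : measurable_fun setT G by exact/measurable_EFinP.
pose h := nnsfun_approx mE mf.
have -> : \int[nu]_(x in E) f x =
    lim (\int[nu]_(x in E) (EFin \o h n) x @[n --> \oo]).
  have fE x : E x -> f x = lim ((EFin \o h n) x @[n --> \oo]).
    by move=> Ex; apply/esym/cvg_lim => //; exact: cvg_nnsfun_approx.
  under eq_integral => x /[!inE] /fE -> //.
  apply: monotone_convergence => //.
  - move=> n; apply/measurable_EFinP.
    by apply: (measurable_funS measurableT) => //; exact/measurable_funP.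
  - by move=> n x Ex //=; rewrite lee_fin.
  - by move=> x Ex a b ab; rewrite lee_fin; exact/lefP/nd_nnsfun_approx.
have -> : \int[mu]_(x in E) (f x * G x) =
    lim (\int[mu]_(x in E) ((EFin \o h n) \* G) x @[n --> \oo]).
  have fg x : E x -> f x * G x = lim (((EFin \o h n) \* G) x @[n --> \oo]).
    by move=> Ex; apply/esym/cvg_lim => //; apply: cvgeZr;
      [by []|exact: cvg_nnsfun_approx].
  under eq_integral => x /[!inE] /fg -> //.
  apply: monotone_convergence => [//| | |].
  - move=> n; apply/emeasurable_funM; apply/measurable_funTS.
      exact/measurable_EFinP.
    exact: mG.
  - by move=> n x Ex /=; rewrite mule_ge0 ?lee_fin.
  - by move=> x Ex a b ab/=; rewrite lee_wpmul2r ?lee_fin//; exact/lefP/nd_nnsfun_approx.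
suff suf n : \int[mu]_(x in E) ((EFin \o h n) x * G x) =
    \int[nu]_(x in E) (EFin \o h n) x.
  by under eq_fun do rewrite suf.
transitivity (\int[nu]_(x in E)
   (\sum_(y \in range (h n)) (y * \1_(h n @^-1` [set y]) x)%:E)); last first.
  by apply: eq_integral => t tE; rewrite /= fimfunE -fsumEFin.
have indich m r : measurable_fun E (fun x => (r * \1_(h m @^-1` [set r]) x)%:E).
  by apply: (measurable_comp measurableT) => //; exact: measurable_funM.
rewrite ge0_integral_fsum//; last by move=> m y Ey; exact: nnfun_muleindic_ge0.
transitivity (\int[mu]_(x in E) (\sum_(y \in range (h n))
    (y * \1_(h n @^-1` [set y]) x)%:E * G x)).
  under [RHS]eq_integral => x xE.
    rewrite -ge0_mule_fsuml => [|y]; last exact: nnfun_muleindic_ge0.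
    rewrite fsumEFin // -(fimfunE _ x); over.
  by [].
rewrite ge0_integral_fsum//; last 2 first.
  - move=> y; apply: emeasurable_funM => //; apply: measurable_funTS.
    exact: mG.
  - by move=> m y Ey; apply: mule_ge0; [exact: nnfun_muleindic_ge0|rewrite /G lee_fin].
apply: eq_fsbigr => r rhn.
under [RHS]eq_integral do rewrite EFinM.
rewrite integralZl_indic_nnsfun => //.
under eq_integral do rewrite EFinM -muleA.
rewrite ge0_integralZl//.
- under eq_integral do rewrite muleC.
  rewrite (eq_integral (G \_ (h n @^-1` [set r]))); last first.
    by move=> x xE; rewrite epatch_indic.
  rewrite -integral_mkcondr integral_indic//.
  rewrite nug; first by rewrite setIC.
  by apply: measurableI => //; by apply: measurable_funPTI.
- apply: (@emeasurable_funM _ _ _ _ (fun x => (\1_(h n @^-1` [set r]) x)%:E) G).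
    by apply/measurable_EFinP; apply: measurable_indic; by apply: measurable_funPTI.
  exact: measurable_funTS mG.
- by move=> x _; apply: mule_ge0; rewrite lee_fin.
- by move: rhn => /[!inE] -[x _ <-]; rewrite lee_fin.
Qed.
End density.


Section Comb.
Variables (R : realType) (G : groupType) (d : G -> G -> R) (C : R)
  (hC : besicovitch d C).

Lemma sum_ge_term (I : choiceType) (s : {fset I}) (F : I -> R) x :
  (forall i, 0 <= F i) -> x \in s -> F x <= \sum_(i <- s) F i.
Proof.
move=> F0 xs; rewrite (bigD1_seq x) /=; [|by []|]; last first. by case: s {xs}. 
by rewrite lerDl sumr_ge0.
Qed.

Lemma cover_ineq (eps : R) (E T : set G) (rad w F : G -> R) :
  0 < eps -> finite_set T -> E `<=` T -> (forall x, 0 <= rad x) ->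
  (forall y, 0 <= w y) -> (forall y, 0 <= F y) ->
  (forall x, E x -> eps * \sum_(y <- fset_set T) (\1_(cball d x (rad x)) y * w y)
     <= \sum_(y <- fset_set T) (\1_(cball d x (rad x)) y * F y)) ->
  eps * \sum_(y <- fset_set T) (\1_E y * w y) <= C * \sum_(y <- fset_set T) F y.
Proof.
move=> eps0 finT ET rad0 w0 F0 cond.
have finE : finite_set E := sub_finite_set ET finT.
have [Fs [FsE HF]] := hC E rad finE (fun x _ => rad0 x).
have finF : finite_set Fs := sub_finite_set FsE finE.
pose b x y : R := \1_(cball d x (rad x)) y.
have b0 x y : 0 <= b x y by rewrite /b indicE; case: (_ \in _).
have step1 : \sum_(y <- fset_set T) (\1_E y * w y) <=
    \sum_(y <- fset_set T) (w y * \sum_(x <- fset_set Fs) b x y).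
  apply: ler_sum => y _; rewrite indicE.
  case: (boolP (y \in E)) => [/set_mem Ey|_]; last first.
    by rewrite mul0r mulr_ge0 // sumr_ge0.
  rewrite mul1r -{1}[w y]mulr1 ler_wpM2l //.
  have [x Fx bxy] := (HF y).1 Ey.
  have := @sum_ge_term _ (fset_set Fs) (fun x => b x y) x (fun x => b0 x y).
  rewrite in_fset_set // mem_set // => /(_ isT).
  by rewrite /b indicE mem_set.
have step2 : \sum_(y <- fset_set T) (w y * \sum_(x <- fset_set Fs) b x y) =
    \sum_(x <- fset_set Fs) \sum_(y <- fset_set T) (b x y * w y).
  rewrite exchange_big /=; apply: eq_bigr => y _.
  by rewrite mulr_sumr; apply: eq_bigr => x _; rewrite mulrC.
have step3 : eps * \sum_(x <- fset_set Fs) \sum_(y <- fset_set T) (b x y * w y)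
    <= \sum_(x <- fset_set Fs) \sum_(y <- fset_set T) (b x y * F y).
  rewrite mulr_sumr [X in _ <= X]big_seq big_seq; apply: ler_sum => x.
  rewrite in_fset_set // => /set_mem Fx.
  exact: cond (FsE _ Fx).
have step4 : \sum_(x <- fset_set Fs) \sum_(y <- fset_set T) (b x y * F y)
    <= C * \sum_(y <- fset_set T) F y.
  rewrite exchange_big /= mulr_sumr; apply: ler_sum => y _.
  rewrite -mulr_suml mulrC [C * _]mulrC ler_wpM2l //.
  by have := (HF y).2; rewrite fsbig_finite.
apply: le_trans step4; apply: le_trans step3.
by rewrite -step2 ler_wpM2l // ltW.
Qed.

End Comb.

Section Geo.
Variables (R : realType) (G : groupType)
  (d : G -> G -> R) (d_rinv : right_invariant d)
  (Bk_finite : forall k : nat, finite_set (Bk d k)).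

Local Notation mulg := (@monoid.mul G).
Local Notation invg := (@monoid.inv G).
Local Notation oneg := (@monoid.one G).

Lemma sum_sub (A T : set G) (phi : G -> R) : finite_set T -> A `<=` T ->
  \sum_(y <- fset_set A) phi y = \sum_(y <- fset_set T) (\1_A y * phi y).
Proof.
move=> finT AT; have finA := sub_finite_set AT finT.
rewrite -fsbig_finite // -fsbig_finite //.
rewrite -[in LHS](setIidr AT) fsbig_mkcondr; apply: eq_fsbigr => y _.
by rewrite indicE; case: (y \in A); rewrite ?mul1r ?mul0r.
Qed.

Lemma dmul1 g h : d (mulg g h) h = d g oneg.
Proof. by rewrite -{2}(monoid.mul1g h) d_rinv. Qed.

Lemma ball_image h (k : R) :
  cball d h k = (fun g => mulg g h) @` cball d oneg k.
Proof.
apply/seteqP; split => [y yb|_ [g gb <-]].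
  exists (mulg y (invg h)); last by rewrite -monoid.mulgA monoid.mulVg monoid.mulg1.
  by rewrite /cball /= -(dmul1 _ h) -monoid.mulgA monoid.mulVg monoid.mulg1.
by rewrite /cball /= dmul1.
Qed.

Lemma sum_ball h (k : nat) (T : set G) (Phi : G -> R) :
  finite_set T -> cball d h k%:R `<=` T ->
  \sum_(g <- fset_set (Bk d k)) Phi (mulg g h) =
  \sum_(y <- fset_set T) (\1_(cball d h k%:R) y * Phi y).
Proof.
move=> finT bT; rewrite -sum_sub //.
rewrite -(fsbig_finite _ _ (Bk_finite k)) -(fsbig_finite _ _ (sub_finite_set bT finT)).
rewrite ball_image fsbig_image //.
by move=> x y _ _; exact: monoid.mulIg.
Qed.

Lemma setMul_image (A B : set G) :
  setMul A B = (fun p => mulg p.1 p.2) @` (A `*` B).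
Proof.
apply/seteqP; split => [z [a Aa [b Bb ->]]|_ [[a b] [/= Aa Bb] <-]].
  by exists (a, b).
by exists a => //; exists b.
Qed.

Lemma setMul_finite (A B : set G) : finite_set A -> finite_set B ->
  finite_set (setMul A B).
Proof.
by move=> fA fB; rewrite setMul_image; apply: finite_image; exact: finite_setX.
Qed.

Lemma Bk_mono (k L : nat) : (k <= L)%N -> Bk d k `<=` Bk d L.
Proof.
by move=> kL g; rewrite /Bk /cball /= => /le_trans; apply; rewrite ler_nat.
Qed.

Lemma ball_sub (L k : nat) h : (k <= L)%N -> Bk d L h ->
  cball d h k%:R `<=` setMul (Bk d L) (Bk d L).
Proof.
move=> kL hL; rewrite ball_image => _ [g gb <-].
exists g => //; first exact: (@Bk_mono k L kL).
by exists h.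
Qed.

Lemma Bk_one_mem (d_metric : is_metric d) (L : nat) : Bk d L oneg.
Proof.
case: d_metric => h0 _ _; rewrite /Bk /cball /=.
by have -> : d oneg oneg = 0 by apply/h0.
Qed.

Lemma Bk_sub_mul (d_metric : is_metric d) (L : nat) :
  Bk d L `<=` setMul (Bk d L) (Bk d L).
Proof.
move=> h hL; exists oneg; first exact: Bk_one_mem.
by exists h => //; rewrite monoid.mul1g.
Qed.

End Geo.

Section Main.
Local Open Scope ereal_scope.
Variables (R : realType) (G : groupType)
  (d : G -> G -> R) (d_metric : is_metric d) (d_rinv : right_invariant d)
  (dX : measure_display) (X : measurableType dX)
  (mu : probability X R)
  (act : G -> X -> X) (hact : measurable_action act)
  (omega : G -> X -> R) (homega : is_RN_cocycle mu act omega).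

Local Notation mulg := (@monoid.mul G).
Local Notation invg := (@monoid.inv G).
Local Notation oneg := (@monoid.one G).

Lemma actK g x : act (invg g) (act g x) = x.
Proof.
case: hact => h1 hM _; by rewrite -hM monoid.mulVg h1.
Qed.

Lemma actVK g x : act g (act (invg g) x) = x.
Proof.
case: hact => h1 hM _; by rewrite -hM monoid.mulgV h1.
Qed.

Lemma act_meas g : measurable_fun setT (act g).
Proof. by case: hact. Qed.

Lemma image_act g (A : set X) : act g @` A = act (invg g) @^-1` A.
Proof.
apply/seteqP; split => [y [a Aa <-]|y Ay]; first by rewrite /= actK.
by exists (act (invg g) y) => //; rewrite actVK.
Qed.

Lemma meas_image g (A : set X) : measurable A -> measurable (act g @` A).
Proof.
move=> mA; rewrite image_act -[X in measurable X]setTI.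
exact: (act_meas (invg g)).
Qed.

Lemma omega_meas g : measurable_fun setT (omega g).
Proof. by case: (homega g). Qed.

Lemma omega_ge0 g x : (0 <= omega g x)%R.
Proof. by case: (homega g). Qed.

Lemma omega_int g A : measurable A ->
  mu (act g @` A) = \int[mu]_(x in A) (omega g x)%:E.
Proof. by move=> mA; case: (homega g) => _ _ ->. Qed.

Lemma CV h (phi : X -> \bar R) : (forall x, 0 <= phi x) ->
  measurable_fun setT phi ->
  \int[mu]_x (phi (act h x) * (omega h x)%:E) = \int[mu]_x phi x.
Proof.
move=> phi0 mphi.
have mi := act_meas (invg h).
rewrite (@density_cov _ _ _ (pushforward mu (act (invg h))) mu (omega h)
   (omega_meas h) (omega_ge0 h)) //; last first.
- apply: measurableT_comp => //; exact: act_meas.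
- move=> A mA; rewrite /pushforward -omega_int// image_act.
  by [].
rewrite ge0_integral_pushforward //=; cycle 1.
  exact: measurableT_comp mphi (act_meas h).
rewrite preimage_setT; apply: eq_integral => x _ /=.
by rewrite actVK.

Qed.

Lemma omega_integrable g : mu.-integrable setT (EFin \o omega g).
Proof.
apply/integrableP; split; first exact/measurable_EFinP/omega_meas.
rewrite (eq_integral (fun x => (omega g x)%:E)); last first.
  by move=> x _; rewrite /= ger0_norm ?omega_ge0.
rewrite -omega_int//; apply: (le_lt_trans (probability_le1 _ _)) => //.
  exact: meas_image.
exact: ltry.
Qed.

Lemma omegaM_meas g h :
  measurable_fun setT (fun x => omega g (act h x) * omega h x)%R.
Proof.
apply: measurable_funM; last exact: omega_meas.
exact: measurableT_comp (omega_meas g) (act_meas h).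
Qed.

Lemma cocycle g h : ae_eq mu setT (EFin \o omega (mulg g h))
  (fun x => (omega g (act h x) * omega h x)%:E).
Proof.
apply: integral_ae_eq => //; first exact: omega_integrable.
  exact/measurable_EFinP/omegaM_meas.
move=> E _ mE; rewrite /= -omega_int//.
pose phi y := ((\1_(act h @` E) y : R) * omega g y)%:E.
have mphi : measurable_fun setT phi.
  apply/measurable_EFinP; apply: measurable_funM; last exact: omega_meas.
  by apply: measurable_indic; exact: meas_image.
have phi0 y : 0 <= phi y by rewrite lee_fin mulr_ge0 ?omega_ge0.
transitivity (\int[mu]_x (phi (act h x) * (omega h x)%:E)); last first.
  rewrite [RHS]integral_mkcond; apply: eq_integral => x _; rewrite /patch /phi.
  case: ifPn => [/set_mem Ex|nEx].
    by rewrite indicE mem_set ?mul1r -?EFinM//; exists x.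
  rewrite indicE memNset ?mul0r ?mul0e//.
  move=> [y Ey /(congr1 (act (invg h)))]; rewrite !actK => yx.
  by rewrite -yx mem_set in nEx.
rewrite CV//.
have -> : act (mulg g h) @` E = act g @` (act h @` E).
  rewrite image_comp; congr image; apply/funext => x.
  by case: hact => _ hM _; rewrite hM.
rewrite omega_int ?meas_image//.
rewrite [LHS]integral_mkcond; apply: eq_integral => y _; rewrite /patch /phi.
case: ifPn => [/set_mem Ey|nEy].
  by rewrite indicE mem_set ?mul1r.
by rewrite indicE (negbTE nEy) mul0r.
exact: meas_image.
Qed.


Variables (Bk_finite : forall k : nat, finite_set (Bk d k))
  (C D : R) (hC : besicovitch d C) (hD : mult_doubling d D)
  (f : X -> R) (hf : mu.-integrable [set: X] (EFin \o f))
  (eps : R) (heps : (0 < eps)%R).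

Definition ratio k x :=
  (hatsum d act omega k f x / hatsum d act omega k (fun=> 1%R) x)%R.
Definition EN N := [set x | exists k, (1 <= k <= N)%N /\ (eps < `|ratio k x|)%R].

Lemma f_meas : measurable_fun setT f.
Proof. exact/measurable_EFinP/(measurable_int mu hf). Qed.

Lemma hatsumE k phi x : hatsum d act omega k phi x =
  (\sum_(g <- fset_set (Bk d k)) phi (act g x) * omega g x)%R.
Proof. by rewrite /hatsum fsbig_finite. Qed.

Lemma hatsum_meas k phi : measurable_fun setT phi ->
  measurable_fun setT (hatsum d act omega k phi).
Proof.
move=> mphi; rewrite (_ : hatsum _ _ _ _ _ = fun x =>
  (\sum_(g <- fset_set (Bk d k)) phi (act g x) * omega g x)%R).
  apply: measurable_sum => g; apply: measurable_funM; last exact: omega_meas.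
  exact: measurableT_comp mphi (act_meas g).
by apply/funext => x; rewrite hatsumE.
Qed.

Lemma ratio_set_meas (a b : X -> R) : measurable_fun setT a ->
  measurable_fun setT b -> measurable [set x | (eps < `|a x / b x|)%R].
Proof.
move=> ma mb.
pose P x := (b x != 0%R) && (eps * `|b x| < `|a x|)%R.
have -> : [set x | (eps < `|a x / b x|)%R] = P @^-1` [set true].
  apply/seteqP; split => x /=.
    have [->|b0] := eqVneq (b x) 0%R.
      by rewrite invr0 mulr0 normr0 => /(lt_trans heps); rewrite ltxx.
    by rewrite /P b0 normrM normfV ltr_pdivlMr ?normr_gt0.
  by rewrite /P => /andP[b0]; rewrite normrM normfV ltr_pdivlMr ?normr_gt0.
have mP : measurable_fun setT P.
  apply: measurable_and.
    by apply: measurable_neg; apply: measurable_fun_eqr => //; exact: measurable_cst.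
  apply: measurable_fun_ltr.
    by apply: measurable_funM; [exact: measurable_cst|exact: measurableT_comp mb].
  exact: measurableT_comp ma.
by rewrite -[X in measurable X]setTI; apply: mP.
Qed.

Lemma EN_meas N : measurable (EN N).
Proof.
rewrite (_ : EN N = \bigcup_(k in [set k | (1 <= k <= N)%N])
    [set x | (eps < `|ratio k x|)%R]).
  apply: bigcup_measurable => k _; apply: ratio_set_meas.
    exact: hatsum_meas f_meas.
  by apply: hatsum_meas; exact: measurable_cst.
apply/seteqP; split => [x [k [kN hk]]|x [k kN hk]]; first by exists k.
by exists k.
Qed.


Lemma ae_seq (I : eqType) (s : seq I) (P : I -> X -> Prop) :
  (forall i, \forall x \ae mu, P i x) ->
  \forall x \ae mu, forall i, i \in s -> P i x.
Proof.
move=> H; elim: s => [|i s IH].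
  by apply: nearW => x i; rewrite in_nil.
apply: filterS2 (H i) IH => x Pi Ps j; rewrite inE => /orP[/eqP->//|].
exact: Ps.
Qed.

Definition goodL L x := forall g, g \in fset_set (Bk d L) ->
  forall h, h \in fset_set (Bk d L) ->
  (omega g (act h x) * omega h x = omega (mulg g h) x)%R.

Lemma ae_good L : \forall x \ae mu, goodL L x.
Proof.
have H : \forall x \ae mu, forall g, g \in fset_set (Bk d L) ->
  forall h, h \in fset_set (Bk d L) ->
  (omega g (act h x) * omega h x = omega (mulg g h) x)%R.
  apply: ae_seq => g; apply: ae_seq => h.
  by apply: filterS (cocycle g h) => x /(_ I) [->].
exact: H.
Qed.

Lemma ratio_bound k y : (eps < `|ratio k y|)%R ->
  (eps * \sum_(g <- fset_set (Bk d k)) omega g y <=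
   \sum_(g <- fset_set (Bk d k)) `|f (act g y)| * omega g y)%R.
Proof.
rewrite /ratio !hatsumE.
have -> : (\sum_(g <- fset_set (Bk d k)) (fun=> 1%R) (act g y) * omega g y)%R =
  (\sum_(g <- fset_set (Bk d k)) omega g y)%R by apply: eq_bigr => g _; rewrite mul1r.
set b := (\sum_(g <- _) omega g y)%R.
set a := (\sum_(g <- _) f (act g y) * omega g y)%R.
have b0 : (0 <= b)%R by apply: sumr_ge0 => g _; exact: omega_ge0.
have [->|bn0] := eqVneq b 0%R.
  by rewrite invr0 mulr0 normr0 => /(lt_trans heps); rewrite ltxx.
have bpos : (0 < b)%R by rewrite lt_neqAle eq_sym bn0 b0.
rewrite normrM normfV (ger0_norm b0) ltr_pdivlMr // => h.
apply: le_trans (ltW h) _.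
apply: le_trans (ler_norm_sum _ _ _) _.
apply: ler_sum => g _; rewrite normrM (ger0_norm (omega_ge0 _ _)).
by [].
Qed.

Lemma ptwise N L x : (N <= L)%N -> goodL L x ->
  (eps * \sum_(h <- fset_set (Bk d L)) ((\1_(EN N) (act h x) : R) * omega h x)
   <= C * \sum_(y <- fset_set (setMul (Bk d L) (Bk d L)))
            (`|f (act y x)| * omega y x))%R.
Proof.
move=> NL good.
set T := setMul (Bk d L) (Bk d L).
have finT : finite_set T := setMul_finite _ _ _ (Bk_finite L) (Bk_finite L).
have BT : Bk d L `<=` T := Bk_sub_mul _ _ _ d_metric L.
pose E' := Bk d L `&` [set h | EN N (act h x)].
have : forall h, exists k : nat, E' h ->
    (1 <= k <= N)%N /\ (eps < `|ratio k (act h x)|)%R.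
  move=> h; case: (pselect (E' h)) => [[_ [k hk]]|nE]; first by exists k.
  by exists 0%N.
move=> /choice [kk hkk].
rewrite (sum_sub _ _ _ _ _ finT BT).
rewrite (eq_bigr (fun y => (\1_E' y * omega y x)%R)); last first.
  by move=> y _; rewrite mulrA indicI.
apply: (cover_ineq _ _ _ _ hC eps E' T (fun h => (kk h)%:R) (fun y => omega y x)
  (fun y => `|f (act y x)| * omega y x)%R) => //.
- by move=> h [hL _]; exact: BT.
- by move=> y; exact: omega_ge0.
- by move=> y; rewrite mulr_ge0 ?omega_ge0.
move=> h [hL hE]; have [/andP[k1 kN] hk] := hkk h (conj hL hE).
have kL : (kk h <= L)%N by exact: leq_trans kN NL.
have bT := ball_sub _ _ _ d_rinv L (kk h) h kL hL.
rewrite -(sum_ball _ _ _ d_rinv Bk_finite h (kk h) T (fun y => omega y x) finT bT).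
rewrite -(sum_ball _ _ _ d_rinv Bk_finite h (kk h) T
   (fun y => `|f (act y x)| * omega y x)%R finT bT).
have hin : h \in fset_set (Bk d L) by rewrite in_fset_set // mem_set.
have gin g : g \in fset_set (Bk d (kk h)) -> g \in fset_set (Bk d L).
  rewrite !in_fset_set // => /set_mem gk; apply/mem_set.
  exact: (Bk_mono _ _ _ _ _ kL).
have eq1 : (\sum_(g <- fset_set (Bk d (kk h))) omega (mulg g h) x =
    (\sum_(g <- fset_set (Bk d (kk h))) omega g (act h x)) * omega h x)%R.
  rewrite mulr_suml big_seq [RHS]big_seq; apply: eq_bigr => g gk.
  by rewrite good // gin.
have eq2 : (\sum_(g <- fset_set (Bk d (kk h))) `|f (act (mulg g h) x)| * omega (mulg g h) x =
    (\sum_(g <- fset_set (Bk d (kk h))) `|f (act g (act h x))| * omega g (act h x)) * omega h x)%R.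
  rewrite mulr_suml big_seq [RHS]big_seq; apply: eq_bigr => g gk.
  case: hact => _ hM _.
  by rewrite -(good g (gin g gk) h hin) hM mulrA.
rewrite eq1 eq2 mulrA; apply: ler_wpM2r; first exact: omega_ge0.
exact: ratio_bound.
Qed.

Lemma sum_cst (V : nmodType) (I : Type) (s : seq I) (c : V) :
  (\sum_(i <- s) c = c *+ size s)%R.
Proof. by elim: s => [|i s IH]; rewrite ?big_nil ?mulr0n // big_cons IH mulrS. Qed.

Lemma int_csum (I : Type) (c : R) (s : seq I) (phi : I -> X -> R) :
  (0 <= c)%R -> (forall i, measurable_fun setT (phi i)) ->
  (forall i x, 0 <= phi i x)%R ->
  \int[mu]_x (c * \sum_(i <- s) phi i x)%:E =
  c%:E * \sum_(i <- s) \int[mu]_x (phi i x)%:E.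
Proof.
move=> c0 mphi phi0.
under eq_integral => x _ do rewrite EFinM -sumEFin.
rewrite ge0_integralZl //.
- congr (_ * _); apply: ge0_integral_sum => //.
  + by move=> i; exact/measurable_EFinP.
  + by move=> i x _; rewrite lee_fin.
- by apply: emeasurable_sum => i; exact/measurable_EFinP.
- by move=> x _; rewrite sumEFin lee_fin sumr_ge0.
Qed.

Lemma C_ge0 : (0 <= C)%R.
Proof.
have [F [FE HF]] := hC [set oneg] (fun=> 0%R) (finite_set1 _) (fun _ _ => lexx _).
have finF : finite_set F := sub_finite_set FE (finite_set1 _).
apply: le_trans (HF oneg).2; rewrite fsbig_finite //.
by apply: sumr_ge0 => x _; rewrite indicE; case: (_ \in _).
Qed.

Lemma normf_meas : measurable_fun setT (fun x => `|f x|)%R.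
Proof. exact: measurableT_comp f_meas. Qed.

Lemma integrated N L : (N <= L)%N ->
  (eps * #|` fset_set (Bk d L)|%:R)%:E * mu (EN N) <=
  (C * #|` fset_set (setMul (Bk d L) (Bk d L))|%:R)%:E * \int[mu]_x (`|f x|)%:E.
Proof.
move=> NL.
have mph h : measurable_fun setT (fun x => (\1_(EN N) (act h x) : R) * omega h x)%R.
  apply: measurable_funM; last exact: omega_meas.
  apply: measurableT_comp (act_meas h); apply: measurable_indic; exact: EN_meas.
have mps y : measurable_fun setT (fun x => `|f (act y x)| * omega y x)%R.
  apply: measurable_funM; last exact: omega_meas.
  exact: measurableT_comp normf_meas (act_meas y).
have H1 : \int[mu]_x (eps * \sum_(h <- fset_set (Bk d L))
      ((\1_(EN N) (act h x) : R) * omega h x))%:E =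
    (eps * #|` fset_set (Bk d L)|%:R)%:E * mu (EN N).
  rewrite int_csum //; first last.
  - by move=> h x; rewrite mulr_ge0 ?omega_ge0 // indicE; case: (_ \in _).
  - exact: ltW.
  rewrite (eq_bigr (fun _ => mu (EN N))); last first.
    move=> h _; under eq_integral do rewrite EFinM.
    rewrite (CV h (fun y => (\1_(EN N) y : R)%:E)) //.
    + by rewrite integral_indic ?setIT //; exact: EN_meas.
    + by apply/measurable_EFinP; apply: measurable_indic; exact: EN_meas.
  have mfin : mu (EN N) \is a fin_num by apply: fin_num_measure; exact: EN_meas.
  rewrite -(fineK mfin) sumEFin sum_cst -!EFinM; congr EFin.
  by rewrite -[(fine _ *+ _)%R]mulr_natr; ring.
have Ifin : \int[mu]_x (`|f x|)%:E \is a fin_num.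
  rewrite ge0_fin_numE; last by apply: integral_ge0 => x _; rewrite lee_fin.
  by case/integrableP: hf.
have H2 : \int[mu]_x (C * \sum_(y <- fset_set (setMul (Bk d L) (Bk d L)))
      (`|f (act y x)| * omega y x))%:E =
    (C * #|` fset_set (setMul (Bk d L) (Bk d L))|%:R)%:E * \int[mu]_x (`|f x|)%:E.
  rewrite int_csum //; first last.
  - by move=> y x; rewrite mulr_ge0 ?omega_ge0.
  - exact: C_ge0.
  rewrite (eq_bigr (fun _ => \int[mu]_x (`|f x|)%:E)); last first.
    move=> y _; under eq_integral do rewrite EFinM.
    rewrite (CV y (fun z => (`|f z|)%:E)) //.
    exact/measurable_EFinP/normf_meas.
  rewrite -(fineK Ifin) sumEFin sum_cst -!EFinM; congr EFin.
  by rewrite -[(fine _ *+ _)%R]mulr_natr; ring.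
rewrite -H1 -H2; apply: ae_ge0_le_integral => //.
- by move=> x _; rewrite lee_fin mulr_ge0 ?(ltW heps) // sumr_ge0 // => h _;
    rewrite mulr_ge0 ?omega_ge0 // indicE; case: (_ \in _).
- apply/measurable_EFinP; apply: measurable_funM; first exact: measurable_cst.
  exact: measurable_sum.
- by move=> x _; rewrite lee_fin mulr_ge0 ?C_ge0 // sumr_ge0 // => y _;
    rewrite mulr_ge0 ?omega_ge0.
- apply/measurable_EFinP; apply: measurable_funM; first exact: measurable_cst.
  exact: measurable_sum.
apply: filterS (ae_good L) => x gx _; rewrite lee_fin.
exact: ptwise.
Qed.


Lemma bound N : mu (EN N) <= (C * D / eps)%:E * \int[mu]_x (`|f x|)%:E.
Proof.
have [K hK] := hD.
pose L := maxn N K.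
have := integrated N L (leq_maxl N K).
have := hK L (leq_maxr N K).
rewrite -/L.
set nL := #|` fset_set (Bk d L)|.
set nT := #|` fset_set (setMul (Bk d L) (Bk d L))|.
move=> hT.
have mfin : mu (EN N) \is a fin_num by apply: fin_num_measure; exact: EN_meas.
have Ifin : \int[mu]_x (`|f x|)%:E \is a fin_num.
  rewrite ge0_fin_numE; last by apply: integral_ge0 => x _; rewrite lee_fin.
  by case/integrableP: hf.
have i0 : (0 <= fine (\int[mu]_x (`|f x|)%:E))%R.
  by apply: fine_ge0; apply: integral_ge0 => x _; rewrite lee_fin.
have nL0 : (0 < nL)%N.
  rewrite /nL -has_predT; apply/hasP; exists oneg => //.
  by rewrite in_fset_set // mem_set //; exact: Bk_one_mem.
rewrite -(fineK mfin) -(fineK Ifin) -!EFinM !lee_fin => h.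
set m := fine (mu (EN N)) in h *.
set i := fine (\int[mu]_x (`|f x|)%:E) in h i0 *.
have epsn : (0 < eps * nL%:R)%R by rewrite mulr_gt0 // ltr0n.
rewrite -(ler_pM2l epsn).
apply: (le_trans h).
have -> : (eps * nL%:R * (C * D / eps * i) = C * (D * nL%:R) * i)%R.
  by field; rewrite gt_eqF.
by rewrite ler_wpM2r // ler_wpM2l // C_ge0.
Qed.

Lemma main_ineq :
  (mu [set x | eps%:E <
        ereal_sup [set (`| hatsum d act omega k f x
                          / hatsum d act omega k (fun=> 1) x |)%:E
                  | k in [set k : nat | (1 <= k)%N]]]
   <= (C * D / eps)%:E * \int[mu]_x (`| f x |)%:E)%E.
Proof.
have eqS : [set x | eps%:E <
        ereal_sup [set (`| hatsum d act omega k f x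
                          / hatsum d act omega k (fun=> 1) x |)%:E
                  | k in [set k : nat | (1 <= k)%N]]] = \bigcup_N EN N.
  apply/seteqP; split => x /=.
    move=> /ereal_sup_gt [_ [k k1 <-]]; rewrite lte_fin => hk.
    by exists k => //; exists k; rewrite k1 leqnn.
  move=> [N _ [k [/andP[k1 kN] hk]]].
  apply: (lt_le_trans (y := (`|ratio k x|)%:E)); first by rewrite lte_fin.
  by apply: ereal_sup_ubound; exists k.
rewrite eqS.
have nd : {homo EN : n m / (n <= m)%N >-> (n <= m)%O}.
  move=> n m nm; apply/subsetPset => x [k [/andP[k1 kn] hk]].
  by exists k; rewrite k1 (leq_trans kn nm).
have hcvg := @nondecreasing_cvg_mu _ _ _ mu EN EN_meas (bigcup_measurable (fun k _ => EN_meas k)) nd.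
rewrite -(cvg_lim _ hcvg) //; apply: lime_le.
  by apply/cvg_ex; eexists; exact: hcvg.
by apply: nearW => N; exact: bound.
Qed.

End Main.

Theorem theorem7 (R : realType) (G : groupType)
  (G_countable : countable [set: G])
  (d : G -> G -> R) (d_metric : is_metric d) (d_rinv : right_invariant d)
  (Bk_finite : forall k : nat, finite_set (Bk d k))
  (C D : R) (hC : besicovitch d C) (hD : mult_doubling d D)
  (dX : measure_display) (X : measurableType dX)
  (mu : probability X R)
  (act : G -> X -> X) (hact : measurable_action act)
  (hns : nonsingular mu act)
  (omega : G -> X -> R) (homega : is_RN_cocycle mu act omega)
  (f : X -> R) (hf : mu.-integrable [set: X] (EFin \o f))
  (eps : R) (heps : 0 < eps) :
  (mu [set x | eps%:E <
        ereal_sup [set (`| hatsum d act omega k f x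
                          / hatsum d act omega k (fun=> 1) x |)%:E
                  | k in [set k : nat | (1 <= k)%N]]]
   <= (C * D / eps)%:E * \int[mu]_x (`| f x |)%:E)%E.
Proof.
exact: (@main_ineq R G d d_metric d_rinv dX X mu act hact omega homega Bk_finite C D hC hD f hf eps heps).
Qed.
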